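(* Consider the online resource allocation model with samples described in the context, where $r_1,r_2$ are unknown to the decision-maker. Consider the algorithm that, with probability $1/2$, accepts only type 1 agents (each arriving type 1 agent is accepted while resource remains, all type 2 agents rejected), and with probability $1/2$ accepts only type 2 agents. For $p=O(1/\sqrt m)$ and any $m>0$, the competitive ratio of this algorithm is $1/2$.
   Context: Model: a decision-maker has $m$ units of a divisible resource to allocate to unit-demand agents of two types; an accepted type-$i$ agent ($i\in\{1,2\}$) yields a reward in $\{0,1\}$ with mean $r_i\in(0,1)$, $r_1>r_2$. An adversary chooses integers $h,\ell\ge0$. Each agent is independently sampled with probability $p$; $s_1\sim\mathrm{Bin}(h,p)$, $s_2\sim\mathrm{Bin}(\ell,p)$; $\psi$ is the sample information. The remaining $n_1=h-s_1$ type 1 and $n_2=\ell-s_2$ type 2 agents arrive online in an adversarial order $I$; on each arrival the decision-maker irrevocably accepts (possibly fractionally) or rejects, total allocation at most $m$. $\mathrm{OPT}(I)=r_1\min\{n_1,m\}+r_2\min\{n_2,(m-n_1)^+\}$. The competitive ratio of an algorithm $A$ is $\inf_{(h,\ell)}\mathbb E_\psi[\inf_I\mathbb E[\mathrm{REW}_A(I,\psi)]/\mathrm{OPT}(I)]$, $\mathrm{REW}_A$ being its cumulative expected reward and the inner expectation over its randomness. *)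

(* Defs.v *)
From HB Require Import structures.
From mathcomp Require Import all_boot all_order all_algebra.
From mathcomp Require Import all_classical all_reals.
Set Implicit Arguments. Unset Strict Implicit. Unset Printing Implicit Defensive.
Import Order.TTheory GRing.Theory Num.Theory.
Local Open Scope ring_scope.
Local Open Scope classical_set_scope.

Section Model.
Variable R : realType.

(* An arrival sequence: true = type 1 agent, false = type 2 agent. *)

Fixpoint rew_only (r1 r2 : R) (t : bool) (c : R) (I : seq bool) : R :=
  match I with
  | [::] => 0
  | a :: I' =>
      if a == t then
        let x := Num.min 1 c in
        (if t then r1 else r2) * x + rew_only r1 r2 t (c - x) I'
      else rew_only r1 r2 t c I'
  end.

(* The randomized algorithm: w.p. 1/2 accept only type 1, w.p. 1/2 only type 2.
   Its expected reward (expectation over its internal randomness). *)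
Definition rew_alg (m : nat) (r1 r2 : R) (I : seq bool) : R :=
  2^-1 * rew_only r1 r2 true m%:R I + 2^-1 * rew_only r1 r2 false m%:R I.

Definition OPT (m : nat) (r1 r2 : R) (n1 n2 : nat) : R :=
  r1 * Num.min n1%:R m%:R
  + r2 * Num.min n2%:R (Num.max (m%:R - n1%:R) 0).

(* Ratio REW/OPT, with the convention 0/0 := 1 (OPT = 0 only when no
   agent arrives, in which case any algorithm is optimal). *)
Definition ratio (m : nat) (r1 r2 : R) (n1 n2 : nat) (I : seq bool) : R :=
  if OPT m r1 r2 n1 n2 == 0 then 1 else rew_alg m r1 r2 I / OPT m r1 r2 n1 n2.

Definition arrivals (n1 n2 : nat) : set (seq bool) :=
  [set I | count id I = n1 /\ count negb I = n2].

Definition worst_ratio (m : nat) (r1 r2 : R) (n1 n2 : nat) : R :=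
  inf [set ratio m r1 r2 n1 n2 I | I in arrivals n1 n2].

Definition binom_pmf (n : nat) (p : R) (k : nat) : R :=
  'C(n, k)%:R * p ^+ k * (1 - p) ^+ (n - k).

(* E_psi over s1 ~ Bin(h,p), s2 ~ Bin(l,p); n1 = h - s1, n2 = l - s2. *)
Definition expected_ratio (m : nat) (p r1 r2 : R) (h l : nat) : R :=
  \sum_(s1 < h.+1) \sum_(s2 < l.+1)
     binom_pmf h p s1 * binom_pmf l p s2 * worst_ratio m r1 r2 (h - s1) (l - s2).

Definition competitive_ratio (m : nat) (p r1 r2 : R) : R :=
  inf [set x | exists h l : nat, x = expected_ratio m p r1 r2 h l].

End Model.

(* Main.v *)
Require Import Defs.
From HB Require Import structures.
From mathcomp Require Import all_boot all_order all_algebra.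
From mathcomp Require Import all_classical all_reals.
From mathcomp Require Import lra.
Import Order.TTheory GRing.Theory Num.Theory.
Local Open Scope ring_scope.

Section S.
Variable R : realType.


Lemma rew_count (r1 r2 : R) t (I : seq bool) (k : nat) :
  rew_only r1 r2 t k%:R I =
  (if t then r1 else r2) * (minn (count (fun a => a == t) I) k)%:R.
Proof.
elim: I k => [|a I IH] k /=; first by rewrite min0n mulr0.
case: (a == t); rewrite ?IH ?add0n //=.
idtac.
case: k => [|k].
  rewrite min_r ?ler01 // subr0 IH !minn0 mulr0 addr0 //.
rewrite min_l; last by rewrite ler1n.
have -> : (k.+1%:R - 1 : R) = k%:R by rewrite -natr1 addrK.
rewrite IH add1n minnSS -addn1 natrD mulrDr mulr1 addrC.
by [].
Qed.

Lemma binom_sum (p : R) n : \sum_(i < n.+1) binom_pmf n p i = 1.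
Proof.
have := exprDn (1 - p) p n; rewrite subrK expr1n => ->.
apply: eq_bigr => i _; rewrite /binom_pmf -mulrA mulr_natl; congr (_ *+ _).
by rewrite mulrC.
Qed.

Lemma binom_ge0 (p : R) n k : 0 <= p -> p <= 1 -> 0 <= binom_pmf n p k.
Proof.
move=> p0 p1; rewrite /binom_pmf !mulr_ge0 ?exprn_ge0 ?subr_ge0 //.
Qed.


Lemma natr_minn (a b : nat) : (minn a b)%:R = Num.min a%:R b%:R :> R.
Proof.
case: (leqP a b) => h.
  by rewrite min_l // ler_nat.
by rewrite min_r // ler_nat ltnW.
Qed.

Lemma rew_alg_eq m (r1 r2 : R) n1 n2 I : arrivals n1 n2 I ->
  rew_alg m r1 r2 I = 2^-1 * (r1 * (minn n1 m)%:R + r2 * (minn n2 m)%:R).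
Proof.
case=> c1 c2; rewrite /rew_alg !rew_count /= mulrDr.
have -> : count (eq_op^~ true) I = n1 by rewrite -c1; apply: eq_count => x; rewrite eqb_id.
have -> : count (eq_op^~ false) I = n2 by rewrite -c2; apply: eq_count => x; rewrite eqbF_neg.
by [].
Qed.

Lemma OPT_ge0 m (r1 r2 : R) n1 n2 : 0 <= r1 -> 0 <= r2 -> 0 <= OPT m r1 r2 n1 n2.
Proof.
move=> h1 h2; rewrite /OPT addr_ge0 // mulr_ge0 // le_min ?ler0n //= le_max lexx orbT.
by [].
Qed.

Lemma ratio_ge m (r1 r2 : R) n1 n2 I : 0 <= r1 -> 0 <= r2 -> arrivals n1 n2 I ->
  2^-1 <= Defs.ratio m r1 r2 n1 n2 I.
Proof.
move=> h1 h2 hI; rewrite /Defs.ratio; case: eqP => [_|hO].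
  by rewrite invf_le1 // ler1n.
have hO' : 0 < OPT m r1 r2 n1 n2 by rewrite lt_def (@OPT_ge0 m r1 r2 n1 n2 h1 h2) andbT; apply/eqP.
rewrite ler_pdivlMr // (@rew_alg_eq m r1 r2 n1 n2 I hI) /OPT [X in _ <= X]mulrC.
rewrite [X in X <= _]mulrC; apply: ler_wpM2r; first by rewrite invr_ge0 ler0n.
rewrite !natr_minn.
rewrite lerD2l ler_wpM2l // le_min ge_min lexx /=.
rewrite ge_min ge_max ler0n andbT.
by rewrite gerDl oppr_le0 ler0n orbT.
Qed.

Lemma arrivals_ne n1 n2 : arrivals n1 n2 (nseq n1 true ++ nseq n2 false).
Proof. by split; rewrite count_cat !count_nseq /= mul1n mul0n ?addn0. Qed.

Lemma worst_ge m (r1 r2 : R) n1 n2 : 0 <= r1 -> 0 <= r2 ->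
  2^-1 <= worst_ratio m r1 r2 n1 n2.
Proof.
move=> h1 h2; apply: lb_le_inf.
  by exists (Defs.ratio m r1 r2 n1 n2 (nseq n1 true ++ nseq n2 false)); exists (nseq n1 true ++ nseq n2 false) => //; exact: arrivals_ne.
by move=> _ [I hI <-]; apply: ratio_ge.
Qed.

Lemma expected_ge m (p r1 r2 : R) h l : 0 <= p -> p <= 1 -> 0 <= r1 -> 0 <= r2 ->
  2^-1 <= expected_ratio m p r1 r2 h l.
Proof.
move=> p0 p1 h1 h2; rewrite /expected_ratio.
have E : (2^-1 : R) = \sum_(s1 < h.+1) \sum_(s2 < l.+1) binom_pmf h p s1 * binom_pmf l p s2 * 2^-1.
  move: (2^-1 : R) => c.
  rewrite -[LHS]mul1r -(binom_sum p h) mulr_suml; apply: eq_bigr => i _.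
  rewrite -[LHS]mulr1 -(binom_sum p l) mulr_sumr; apply: eq_bigr => j _.
  by rewrite mulrAC.
rewrite {1}E; apply: ler_sum => i _; apply: ler_sum => j _.
apply: ler_wpM2l; first by rewrite mulr_ge0 ?binom_ge0.
exact: worst_ge.
Qed.

Lemma inf_const (S : set R) v : S v -> (forall x, S x -> x = v) -> inf S = v.
Proof.
move=> Sv hS; apply/le_anti/andP; split.
  by apply: ge_inf => //; exists v => x /hS ->.
by apply: lb_le_inf; [exists v | move=> x /hS ->].
Qed.

Lemma ratio0 m (r1 r2 : R) n2 I : (0 < m)%N -> 0 < r2 -> arrivals 0 n2 I ->
  Defs.ratio m r1 r2 0 n2 I = if n2 == 0%N then 1 else 2^-1.
Proof.
move=> m0 r20 hI.
have HO : OPT m r1 r2 0 n2 = r2 * (minn n2 m)%:R.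
  rewrite /OPT min_l ?ler0n // mulr0 add0r subr0 max_l ?ler0n // natr_minn //.
rewrite /Defs.ratio HO (@rew_alg_eq m r1 r2 0 n2 I hI) min0n mulr0 add0r.
case: n2 {hI HO} => [|n2] /=; first by rewrite min0n mulr0 eqxx.
have hp : 0 < r2 * (minn n2.+1 m)%:R by rewrite mulr_gt0 // ltr0n leq_min.
rewrite (negbTE (lt0r_neq0 hp)) -mulrA divff //; first by rewrite mulr1.
exact: lt0r_neq0.
Qed.

Lemma worst0 m (r1 r2 : R) n2 : (0 < m)%N -> 0 < r2 ->
  worst_ratio m r1 r2 0 n2 = if n2 == 0%N then 1 else 2^-1.
Proof.
move=> m0 r20; apply: inf_const.
  exists (nseq 0 true ++ nseq n2 false); first exact: arrivals_ne.
  exact: ratio0 (arrivals_ne _ _).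
by move=> _ [I hI <-]; apply: ratio0.
Qed.

Lemma expected0 m (p r1 r2 : R) l : (0 < m)%N -> 0 < r2 ->
  expected_ratio m p r1 r2 0 l = 2^-1 + 2^-1 * p ^+ l.
Proof.
move=> m0 r20; rewrite /expected_ratio big_ord1.
have -> : binom_pmf 0 p (@ord0 0) = 1 by rewrite /binom_pmf /= !mulr1.
have hl : binom_pmf l p l = p ^+ l by rewrite /binom_pmf binn subnn mul1r mulr1.
have hs := binom_sum p l; rewrite big_ord_recr /= hl in hs.
have E0 : forall k : nat, k = l -> (l - k == 0)%N by move=> k ->; rewrite subnn.
rewrite big_ord_recr /= worst0 // E0 // mulr1 mul1r hl.
rewrite (eq_bigr (fun i : 'I_l => binom_pmf l p i * 2^-1)); last first.
  move=> i _; rewrite mul1r worst0 //.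
  suff -> : (l - i == 0)%N = false by [].
  by apply/negbTE; rewrite subn_eq0 -ltnNge ltn_ord.
rewrite -mulr_suml.
have -> : \sum_(i < l) binom_pmf l p i = 1 - p ^+ l by rewrite -hs addrK.
rewrite mulrBl mul1r [p ^+ l * _]mulrC.
move: (p ^+ l) => q; lra.
Qed.

End S.

Theorem theorem5 (R : realType) (m : nat) (p r1 r2 C : R) :
  (0 < m)%N ->
  0 <= p -> p < 1 ->
  p <= C / Num.sqrt (m%:R) ->
  0 < r2 -> r2 < r1 -> r1 < 1 ->
  competitive_ratio m p r1 r2 = 2^-1.
Proof.
move=> m0 p0 plt1 _ r20 r21 _.
have p1 : p <= 1 by exact: ltW.
have r10 : 0 <= r1 by apply: ltW; apply: lt_trans r21.
have r20' : 0 <= r2 by exact: ltW.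
rewrite /competitive_ratio.
match goal with |- inf ?X = _ => set S := X end.

have lb : forall x, S x -> 2^-1 <= x.
  by move=> x [h [l ->]]; apply: expected_ge.
have ne : S (expected_ratio m p r1 r2 0 0) by exists 0%N, 0%N.
apply/le_anti/andP; split; last first.
  by apply: lb_le_inf; [exists (expected_ratio m p r1 r2 0 0) | ].
rewrite leNgt; apply/negP => H.
have hS : forall l, inf S <= 2^-1 + 2^-1 * p ^+ l.
  move=> l; rewrite -(@expected0 R m p r1 r2 l m0 r20).
  apply: ge_inf; first by exists (2^-1) => x /lb.
  by exists 0%N, l.
set d := (inf S - 2^-1) * 2.
have d0 : 0 < d by rewrite /d mulr_gt0 // subr_gt0.
have hd : forall l, d <= p ^+ l.
  move=> l; have := hS l; rewrite /d; move: (inf S) (p ^+ l) => a q; lra.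
have q0 : 0 < 1 - p by rewrite subr_gt0.
have claim : forall N : nat, N%:R * (d * (1 - p)) <= 1 - p ^+ N.
  elim=> [|N IH]; first by rewrite mul0r expr0 subrr.
  have h2 : d * (1 - p) <= p ^+ N - p ^+ N * p.
    by have := ler_wpM2r (ltW q0) (hd N); rewrite [X in _ <= X]mulrBr mulr1.
  rewrite exprSr -addn1 natrD mulrDl mul1r.
  move: IH h2; move: (N%:R * (d * (1 - p))) (d * (1 - p)) (p ^+ N) (p ^+ N * p) => a b c e; lra.
have y0 : 0 < d * (1 - p) by rewrite mulr_gt0.
have yi : 0 <= (d * (1 - p))^-1 by rewrite invr_ge0 ltW.
have := archi_boundP yi.
move: (Num.bound _) => N hN.
have : 1 < N%:R * (d * (1 - p)).
  by rewrite -ltr_pdivrMr // mul1r.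
have := claim N; have : 0 <= p ^+ N by rewrite exprn_ge0.
move: (N%:R * (d * (1 - p))) (p ^+ N) => a b; lra.
Qed.
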